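(* If $\pi$ is an irreducible permutation on a finite alphabet $\mathcal{A}$ with $\pi=\pi^{-1}$, then $\pi$ has at least $g(\pi)$ transpositions, i.e. the map $\pi_{\mathcal{A}}=\pi_0^{-1}\circ\pi_1$ has at least $g(\pi)$ orbits of size two.
   Context: $\pi=(\pi_0,\pi_1)$ with bijections $\pi_\varepsilon:\mathcal{A}\to\{1,\dots,d\}$, irreducible (no $k<d$ with $\pi_0^{-1}(\{1..k\})=\pi_1^{-1}(\{1..k\})$); $\pi^{-1}=(\pi_1,\pi_0)$. The genus $g(\pi)$ is $\tfrac12\mathrm{rank}(\Omega_\pi)$, where $(\Omega_\pi)_{\alpha,\beta}=1$ if $\pi_0(\alpha)<\pi_0(\beta)$ and $\pi_1(\alpha)>\pi_1(\beta)$, $-1$ if $\pi_0(\alpha)>\pi_0(\beta)$ and $\pi_1(\alpha)<\pi_1(\beta)$, $0$ otherwise (equivalently, the genus of any translation surface suspended over $\pi$). *)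

(* Defs.v *)
From mathcomp Require Import all_boot all_order all_algebra all_fingroup.
Set Implicit Arguments. Unset Strict Implicit. Unset Printing Implicit Defensive.
Import GRing.Theory Num.Theory.
Local Open Scope ring_scope.

(* A permutation pi = (pi0, pi1) on a finite alphabet A: two bijections
   A -> {1..d}, d = #|A|.  We use 0-based positions 'I_#|A|. *)
Definition is_perm_pair (A : finType) (pi0 pi1 : A -> 'I_#|A|) : Prop :=
  bijective pi0 /\ bijective pi1.

(* Irreducible: no 1 <= k < d with pi0^-1({1..k}) = pi1^-1({1..k}),
   i.e. (0-based) {a | pi0 a < k} = {a | pi1 a < k}. *)
Definition irreducible_pair (A : finType) (pi0 pi1 : A -> 'I_#|A|) : Prop :=
  forall k : nat, (0 < k)%N -> (k < #|A|)%N ->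
    [set a | (pi0 a < k)%N] != [set a | (pi1 a < k)%N].

(* pi = pi^{-1} where pi^{-1} = (pi1, pi0), equality up to renaming of the
   alphabet (the standard identification of permutations on alphabets):
   there is a bijection tau of A with (pi1, pi0) = (pi0 o tau, pi1 o tau)... *)
Definition self_inverse_pair (A : finType) (pi0 pi1 : A -> 'I_#|A|) : Prop :=
  exists tau : {perm A}, (forall a, pi1 (tau a) = pi0 a) /\ (forall a, pi0 (tau a) = pi1 a).

Definition Omega (A : finType) (pi0 pi1 : A -> 'I_#|A|) : 'M[rat]_#|A| :=
  \matrix_(i, j)
    let a := enum_val i in let b := enum_val j in
    if (pi0 a < pi0 b)%N && (pi1 b < pi1 a)%N then 1
    else if (pi0 b < pi0 a)%N && (pi1 a < pi1 b)%N then -1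
    else 0.

Definition genus (A : finType) (pi0 pi1 : A -> 'I_#|A|) : nat :=
  (\rank (Omega pi0 pi1))./2.

Definition n_transpositions (A : finType) (s : {perm A}) : nat :=
  #|[set O in porbits s | #|O| == 2%N]|.

(* Main.v *)
Require Import Defs.
From mathcomp Require Import all_boot all_order all_algebra all_fingroup.
From mathcomp Require Import ring.
Set Implicit Arguments. Unset Strict Implicit. Unset Printing Implicit Defensive.
Import GRing.Theory Num.Theory.
Local Open Scope ring_scope.

Lemma sum_pick (T : finType) (S : {set T}) (c : T) (g : T -> rat) :
  (\sum_(x in S) (x == c)%:R * g x = if c \in S then g c else 0)%R.
Proof.
rewrite big_mkcond /= (bigD1 c) //= big1 => [|x /negbTE xc].
  by case: ifP; rewrite ?eqxx ?mul1r ?addr0.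
by rewrite xc mul0r; case: ifP.
Qed.

Lemma rank_invol (n : nat) (t : 'I_n -> 'I_n) (tt : forall i, t (t i) = i) :
  (\rank ((1%:M : 'M[rat]_n) - \matrix_(i, j) ((t i == j)%:R))%R <=
   #|[set i : 'I_n | (i < t i)%N]|)%N.
Proof.
set S := [set i : 'I_n | (i < t i)%N].
pose B : 'M[rat]_(n, #|S|) :=
  \matrix_(i, k) ((enum_val k == i)%:R - (enum_val k == t i)%:R)%R.
pose C : 'M[rat]_(#|S|, n) :=
  \matrix_(k, j) ((enum_val k == j)%:R - (t (enum_val k) == j)%:R)%R.
have -> : ((1%:M : 'M[rat]_n) - \matrix_(i, j) ((t i == j)%:R)) = B *m C.
  apply/matrixP => i j; rewrite !mxE.
  transitivity (\sum_(x in S) (((x == i)%:R - (x == t i)%:R) *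
        ((x == j)%:R - (t x == j)%:R)) : rat); last first.
    by rewrite big_enum_val; apply: eq_bigr => k _; rewrite !mxE.
  under eq_bigr do rewrite mulrBl.
  rewrite sumrB !sum_pick !inE tt.
  have [lt|ge] := ltnP i (t i).
    rewrite ltnNge ltnW //= eq_sym; ring.
  have [lt2|ge2] := ltnP (t i) i.
    rewrite eq_sym; ring.
  have e : t i = i by apply/eqP; rewrite -val_eqE /= eqn_leq ge ge2.
  by rewrite e eq_sym subrr.
exact: leq_trans (mxrankM_maxr _ _) (rank_leq_row _).
Qed.

Lemma porbit_invol (A : finType) (tau : {perm A}) (tt : forall a, tau (tau a) = a)
  (a : A) : porbit tau a = [set a; tau a].
Proof.
apply/setP => y; rewrite !inE; apply/porbitP/idP.
  move=> [i ->]; rewrite permX; elim: i => [|i IH] /=; first by rewrite eqxx.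
  by case/orP: IH => /eqP ->; rewrite ?tt eqxx ?orbT.
by case/orP => /eqP ->; [exists 0%N; rewrite expg0 perm1 | exists 1%N; rewrite expg1].
Qed.

Lemma count_invol (A : finType) (tau : {perm A}) (tt : forall a, tau (tau a) = a) :
  #|[set a : A | (enum_rank a < enum_rank (tau a))%N]| = n_transpositions tau.
Proof.
set S := [set a : A | _].
rewrite /n_transpositions.
have -> : [set O in porbits tau | #|O| == 2%N] = porbit tau @: S.
  apply/setP => O; rewrite inE; apply/andP/imsetP.
    case=> /imsetP [x _ ->]; rewrite porbit_invol // cards2 eqSS => nx.
    have [lt|gt|eq] := ltngtP (enum_rank x) (enum_rank (tau x)).
    - by exists x; rewrite ?inE // porbit_invol.
    - exists (tau x); first by rewrite inE tt.
      by rewrite !porbit_invol // tt setUC.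
    - by move/val_inj/enum_rank_inj: eq => e; rewrite -e eqxx in nx.
  case=> x; rewrite inE => lt ->; split; first exact: imset_f.
  rewrite porbit_invol // cards2; case: (x =P tau x) => // e.
  by move: lt; rewrite -e ltnn.
symmetry; apply: card_in_imset => a b; rewrite !inE => la lb.
rewrite !porbit_invol // => e.
have : b \in [set a; tau a] by rewrite e !inE eqxx.
rewrite !inE => /orP [/eqP -> //| /eqP eb].
by move: la lb; rewrite eb tt => la lb; move: (ltn_trans la lb); rewrite ltnn.
Qed.

Lemma sum_pick1 (n : nat) (c : 'I_n) (g : 'I_n -> rat) :
  \sum_k (k == c)%:R * g k = g c.
Proof.
rewrite (bigD1 c) //= big1 => [|x /negbTE ->]; first by rewrite eqxx mul1r addr0.
by rewrite mul0r.
Qed.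

Theorem mainTheorem9 (A : finType) (pi0 pi1 : A -> 'I_#|A|) (piA : {perm A}) :
  is_perm_pair pi0 pi1 ->
  irreducible_pair pi0 pi1 ->
  (forall a, pi0 (piA a) = pi1 a) ->
  self_inverse_pair pi0 pi1 ->
  (genus pi0 pi1 <= n_transpositions piA)%N.
Proof.
move=> [[g0 c0 d0] _] _ hA [tau [h1 h0]].
have inj0 : injective pi0 by apply: can_inj c0.
have etau : tau = piA by apply/permP => a; apply: inj0; rewrite h0 hA.
rewrite -etau /genus.
have tt : forall a, tau (tau a) = a by move=> a; apply: inj0; rewrite h0 h1.
pose t (i : 'I_#|A|) := enum_rank (tau (enum_val i)).
have tti : forall i, t (t i) = i by move=> i; rewrite /t enum_rankK tt enum_valK.
set Om := Omega pi0 pi1.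
have hOm : forall i j, Om (t i) (t j) = - Om i j.
  move=> i j; rewrite /Om /Omega !mxE /t /= !enum_rankK !h0 !h1.
  set a := enum_val i; set b := enum_val j.
  have : ~~ ((pi0 a < pi0 b) && (pi0 b < pi0 a))%N.
    by apply/negP => /andP[x y]; move: (ltn_trans x y); rewrite ltnn.
  have : ~~ ((pi1 a < pi1 b) && (pi1 b < pi1 a))%N.
    by apply/negP => /andP[x y]; move: (ltn_trans x y); rewrite ltnn.
  by case: (pi0 a < pi0 b)%N; case: (pi0 b < pi0 a)%N;
     case: (pi1 a < pi1 b)%N; case: (pi1 b < pi1 a)%N; rewrite /= ?opprK ?oppr0.
clearbody Om.
pose P : 'M[rat]_#|A| := \matrix_(i, j) ((t i == j)%:R).
have tinj : injective t by apply: (can_inj tti).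
have hPO : P *m Om = - (Om *m P).
  apply/matrixP => i j; rewrite !mxE.
  under eq_bigr do rewrite mxE eq_sym.
  rewrite sum_pick1.
  under [X in _ = - X]eq_bigr do rewrite mxE mulrC -{1}(tti j) (inj_eq tinj).
  by rewrite sum_pick1 -{1}(tti j) hOm.
have key : Om *+ 2 = Om *m (1%:M + P) + Om *m (1%:M - P).
  by rewrite mulmxDr mulmxBr mulmx1 mulr2n addrACA subrr addr0.
have e1 : Om *m (1%:M + P) = (1%:M - P) *m Om.
  by rewrite mulmxDr mulmx1 mulmxBl mul1mx hPO opprK.
have hr : (\rank Om <= (\rank (1%:M - P)%R).*2)%N.
  rewrite -(@mxrank_scale_nz _ _ _ (2%:R) Om) // scaler_nat key.
  apply: leq_trans (mxrank_add _ _) _.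
  by rewrite e1 -addnn leq_add // ?mxrankM_maxl ?mxrankM_maxr.
apply: leq_trans (half_leq hr) _; rewrite doubleK.
apply: leq_trans (rank_invol tti) _.
rewrite -(count_invol tt); apply: eq_leq; rewrite -[RHS](card_imset _ (@enum_rank_inj A)).
apply: eq_card => i.
rewrite -[i in RHS]enum_valK mem_imset; last exact: enum_rank_inj.
by rewrite !inE enum_valK.
Qed.
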